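(* The set of N-small rational functions in $\alpha_1,\ldots,\alpha_r$ is closed under addition and multiplication.
   Context: For $f\in \mathbb{Z}[\alpha_1^{\pm 1},\ldots,\alpha_r^{\pm 1}]$ the Newton polytope $\mathcal N(f)\subset\mathbb{R}^r$ is the convex hull of the exponent vectors of the monomials of $f$ with nonzero coefficient. A rational function $h$ (an element of the fraction field of $\mathbb{Z}[\alpha_1^{\pm 1},\ldots,\alpha_r^{\pm 1}]$) written as $h=f_1/f_2$ with $f_1,f_2$ Laurent polynomials is called N-small if $\mathcal N(f_1)\subset\mathcal N(f_2)$; this does not depend on the chosen presentation. *)

(* Defs.v *)
From HB Require Import structures.
From mathcomp Require Import all_boot all_order all_algebra.
From mathcomp Require Import fraction.
From mathcomp Require Import mpoly.
Set Implicit Arguments. Unset Strict Implicit. Unset Printing Implicit Defensive.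
Import Order.TTheory GRing.Theory Num.Theory.
Local Open Scope ring_scope.

(* A Laurent polynomial in alpha_1..alpha_r over Z is represented as a pair
   (p, s) with p : {mpoly int[r]} and s : 'X_{1..r}, standing for
   p * alpha^(-s).  Rational functions are elements of the fraction field
   {fraction {mpoly int[r]}} (= fraction field of the Laurent ring). *)

Definition lpoly (r : nat) := ({mpoly int[r]} * 'X_{1..r})%type.

Definition lexp (R : realFieldType) (r : nat) (m s : 'X_{1..r}) : 'rV[R]_r :=
  \row_(i < r) ((m i)%:R - (s i)%:R).
Arguments lexp R [r] m s.

Definition lsupp (R : realFieldType) (r : nat) (f : lpoly r) : seq 'rV[R]_r :=
  [seq lexp R m f.2 | m <- msupp f.1].
Arguments lsupp R [r] f.

Definition conv_hull (R : realFieldType) (r : nat) (S : seq 'rV[R]_r)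
    (x : 'rV[R]_r) : Prop :=
  exists w : 'I_(size S) -> R,
    [/\ forall i, 0 <= w i, \sum_i w i = 1 & x = \sum_i w i *: S`_i].

Definition newton (R : realFieldType) (r : nat) (f : lpoly r) : 'rV[R]_r -> Prop :=
  conv_hull (lsupp R f).
Arguments newton R [r] f x.

Definition lfrac (r : nat) (f : lpoly r) : {fraction {mpoly int[r]}} :=
  @FracField.tofrac _ f.1 / @FracField.tofrac _ ('X_[f.2] : {mpoly int[r]}).

Definition Nsmall (R : realFieldType) (r : nat) (h : {fraction {mpoly int[r]}}) : Prop :=
  exists f1 f2 : lpoly r,
    [/\ f2.1 != 0, h = lfrac f1 / lfrac f2 &
        forall x : 'rV[R]_r, newton R f1 x -> newton R f2 x].
Arguments Nsmall R [r] h.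

(* Main.v *)
Require Import Defs.
From HB Require Import structures.
From mathcomp Require Import all_boot all_order all_algebra.
From mathcomp Require Import fraction.
From mathcomp Require Import mpoly.
From mathcomp Require Import ring lra.
Set Implicit Arguments. Unset Strict Implicit. Unset Printing Implicit Defensive.
Import Order.TTheory GRing.Theory Num.Theory.
Local Open Scope ring_scope.



Inductive hull (R : realFieldType) (r : nat) (A : 'rV[R]_r -> Prop) : 'rV[R]_r -> Prop :=
| hull_base x : A x -> hull A x
| hull_mix x y (t : R) : hull A x -> hull A y -> 0 <= t -> t <= 1 ->
    hull A (t *: x + (1 - t) *: y).

Lemma hull_mono (R : realFieldType) (r : nat) (A B : 'rV[R]_r -> Prop) x :
  (forall y, A y -> hull B y) -> hull A x -> hull B x.
Proof.
move=> AB; elim=> [y /AB //|y z t _ hy _ hz t0 t1]; exact: hull_mix.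
Qed.

Lemma hull_map (R : realFieldType) (r : nat) (A : 'rV[R]_r -> Prop)
   (f : 'rV[R]_r -> 'rV[R]_r) x :
  (forall t y z, f (t *: y + (1 - t) *: z) = t *: f y + (1 - t) *: f z) ->
  hull A x -> hull (fun w => exists2 a, A a & w = f a) (f x).
Proof.
move=> fP; elim=> [y Ay|y z t _ hy _ hz t0 t1].
  by apply: hull_base; exists y.
by rewrite fP; apply: hull_mix.
Qed.

Lemma hull_add (R : realFieldType) (r : nat) (A B : 'rV[R]_r -> Prop) x y :
  hull A x -> hull B y ->
  hull (fun w => exists a b, [/\ A a, B b & w = a + b]) (x + y).
Proof.
move=> hx hy; elim: hx => [a Aa|x1 x2 t _ h1 _ h2 t0 t1].
  have := hull_map (f := fun w => a + w) _ hy.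
  move=> /(_ _) H; apply: hull_mono (H _).
    by move=> w [b Bb ->]; apply: hull_base; exists a, b.
  by move=> t u v; apply/rowP => i; rewrite !mxE; ring.
have -> : t *: x1 + (1 - t) *: x2 + y = t *: (x1 + y) + (1 - t) *: (x2 + y).
  by apply/rowP => i; rewrite !mxE; ring.
exact: hull_mix.
Qed.

Lemma hull_split (R : realFieldType) (r : nat) (A : 'rV[R]_r -> Prop) z x :
  hull (fun a => A a \/ a = z) x ->
  x = z \/ exists t u, [/\ 0 <= t <= 1, hull A u & x = t *: z + (1 - t) *: u].
Proof.
elim=> [y [Ay|->]|y1 y2 l _ h1 _ h2 l0 l1].
- by right; exists 0, y; split; rewrite ?lexx ?ler01 //; [exact: hull_base|
    apply/rowP => i; rewrite !mxE; ring].
- by left.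
case: h1 => [->|[t1 [u1 [/andP[t10 t11] hu1 ->]]]];
case: h2 => [->|[t2 [u2 [/andP[t20 t21] hu2 ->]]]].
- by left; apply/rowP => i; rewrite !mxE; ring.
- right; exists (l + (1 - l) * t2), u2; split => //.
    by apply/andP; split; nra.
  by apply/rowP => i; rewrite !mxE; ring.
- right; exists (l * t1 + (1 - l)), u1; split => //.
    by apply/andP; split; nra.
  by apply/rowP => i; rewrite !mxE; ring.
- set c := l * (1 - t1) + (1 - l) * (1 - t2).
  have c0 : 0 <= c by rewrite /c; nra.
  have [c_eq0|c_neq0] := eqVneq c 0.
    have e1 : l * (1 - t1) = 0 by rewrite /c in c_eq0; nra.
    have e2 : (1 - l) * (1 - t2) = 0 by rewrite /c in c_eq0; nra.
    left; apply/rowP => i; rewrite !mxE.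
    have -> : l * (t1 * z 0 i + (1 - t1) * u1 0 i) + (1 - l) * (t2 * z 0 i + (1 - t2) * u2 0 i)
      = (l * t1 + (1 - l) * t2) * z 0 i + (l * (1 - t1)) * u1 0 i + ((1 - l) * (1 - t2)) * u2 0 i by ring.
    rewrite e1 e2; have -> : l * t1 + (1 - l) * t2 = 1 - c by rewrite /c; ring.
    by rewrite c_eq0; ring.
  have cp : 0 < c by rewrite lt_def c_neq0.
  right; exists (1 - c), ((l * (1 - t1) / c) *: u1 + (1 - l * (1 - t1) / c) *: u2).
  split.
  - by apply/andP; split; rewrite /c; nra.
  - apply: hull_mix => //; first by apply: divr_ge0; nra.
    by rewrite ler_pdivrMr // mul1r /c; nra.
  - apply/rowP => i; rewrite !mxE /c; field.
    by rewrite /c in c_neq0.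
Qed.



Lemma hull_extreme (R : realFieldType) (r : nat) (T : pred 'rV[R]_r) n (s : seq 'rV[R]_r) :
  (size s <= n)%N ->
  (forall y, y \in s -> T y \/ hull (fun a => a \in s /\ a <> y) y) ->
  forall y, y \in s -> hull (fun a => T a) y.
Proof.
elim: n s => [|n IH] s.
  by rewrite leqn0 => /nilP -> _ y; rewrite in_nil.
move=> sn H.
have [/hasP [z zs /= nTz]|/hasPn allT] := boolP (has (predC T) s); last first.
  by move=> y /allT /negPn Ty; apply: hull_base.
have hz : hull (fun a => a \in s /\ a <> z) z.
  by case: (H z zs) => // Tz; rewrite Tz in nTz.
set s' := filter (predC1 z) s.
have s'n : (size s' <= n)%N.
  have : (size s' < size s)%N.
    have h1 : (0 < count (pred1 z) s)%N.
      by rewrite -has_count; apply/hasP; exists z => //=.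
    have hc : (count (predC1 z) s + count (pred1 z) s = size s)%N.
      by rewrite addnC; exact: count_predC.
    rewrite size_filter -hc; rewrite -[X in (X < _)%N]addn0 ltn_add2l //.
  move=> lt; rewrite -ltnS; exact: leq_trans lt sn.
have mem_s' a : (a \in s') = (a \in s) && (a != z).
  by rewrite mem_filter andbC.
have IHs : forall y, y \in s' -> hull (fun a => T a) y.
  apply: (IH _ s'n) => y; rewrite mem_s' => /andP [ys /eqP yz].
  case: (H y ys) => [Ty|hy]; first by left.
  right.
  have hy' : hull (fun a => (a \in s /\ a <> y /\ a <> z) \/ a = z) y.
    apply: hull_mono hy => a [ain ay]; apply: hull_base.
    by case: (eqVneq a z) => [->|/eqP az]; [right|left].
  have hz' : hull (fun a => (a \in s /\ a <> y /\ a <> z) \/ a = y) z.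
    apply: hull_mono hz => a [ain az]; apply: hull_base.
    by case: (eqVneq a y) => [->|/eqP ay]; [right|left].
  case: (hull_split hy') => [//|[t [u [/andP[t0 t1] hu yE]]]].
  case: (hull_split hz') => [zy|[sg [w [/andP[s0 s1] hw zE]]]].
    by rewrite zy in yz.
  have hsub : forall x, hull (fun a => a \in s /\ a <> y /\ a <> z) x ->
     hull (fun a => a \in s' /\ a <> y) x.
    move=> x; apply: hull_mono => a [ain [ay az]]; apply: hull_base.
    by rewrite mem_s' ain /=; split => //; apply/eqP.
  have [tsg1|tsg1] := eqVneq (t * sg) 1.
    have t1' : t = 1 by nra.
    have s1' : sg = 1 by nra.
    by exfalso; apply: yz; rewrite yE t1' subrr scale0r addr0 scale1r.
  have c0 : 0 < 1 - t * sg.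
    rewrite lt_def subr_eq0 eq_sym tsg1 /=; nra.
  have yE2 : y = (t * (1 - sg) / (1 - t * sg)) *: w +
                (1 - t * (1 - sg) / (1 - t * sg)) *: u.
    apply/rowP => i; rewrite !mxE.
    have ey := congr1 (fun v : 'rV[R]_r => v ord0 i) yE; have ez := congr1 (fun v : 'rV[R]_r => v ord0 i) zE.
    rewrite /= !mxE in ey ez.
    rewrite ez in ey.
    change (y 0 i = t * (sg * y 0 i + (1 - sg) * w 0 i) + (1 - t) * u 0 i) in ey.
    have c0' : 1 - t * sg != 0 by rewrite gt_eqF.
    apply: (mulfI c0'); rewrite mulrDr.
    have -> : (1 - t * sg) * (t * (1 - sg) / (1 - t * sg) * w 0 i) = t * (1 - sg) * w 0 i.
      by field.
    have -> : (1 - t * sg) * ((1 - t * (1 - sg) / (1 - t * sg)) * u 0 i) = (1 - t) * u 0 i.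
      by field.
    nra.
  rewrite [X in hull _ X]yE2.
  apply: (hull_mix (hsub _ hw) (hsub _ hu)).
    by apply: divr_ge0; nra.
  by rewrite ler_pdivrMr // mul1r; nra.
move=> y ys; have [->|yz] := eqVneq y z.
  apply: hull_mono hz => a [ain az]; apply: IHs.
  by rewrite mem_s' ain; apply/eqP.
by apply: IHs; rewrite mem_s' ys yz.
Qed.



Lemma conv_hull_hull (R : realFieldType) (r : nat) (S : seq 'rV[R]_r) x :
  conv_hull S x -> hull (fun y => y \in S) x.
Proof.
elim: S x => [|a S IH] x [w [w0 w1 xE]].
  by move: w1; rewrite big_ord0 => /eqP; rewrite eq_sym oner_eq0.
rewrite big_ord_recl /= in w1; rewrite big_ord_recl /= in xE.
have hS : forall y, hull (fun y => y \in S) y -> hull (fun y => y \in a :: S) y.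
  by move=> y; apply: hull_mono => b bS; apply: hull_base; rewrite inE bS orbT.
have sum0 : 0 <= \sum_(i < size S) w (lift ord0 i) by apply: sumr_ge0.
have [wa1|wa1] := eqVneq (w ord0) 1.
  have : \sum_(i < size S) w (lift ord0 i) = 0.
    by move: w1; rewrite wa1; lra.
  move/psumr_eq0P => /(_ (fun i _ => w0 _)) wz.
  rewrite xE big1 ?addr0 ?wa1 ?scale1r; first by apply: hull_base; rewrite inE eqxx.
  by move=> i _; rewrite wz // scale0r.
have wa_le : w ord0 <= 1.
  by move: w1 sum0; lra.
have c0 : 0 < 1 - w ord0 by rewrite subr_gt0 lt_def eq_sym wa1 wa_le.
set c := 1 - w ord0 in c0.
have cE : \sum_(i < size S) w (lift ord0 i) = c by rewrite /c; move: w1; lra.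
pose x' := \sum_(i < size S) (w (lift ord0 i) / c) *: S`_i.
have hx' : hull (fun y => y \in S) x'.
  apply: IH; exists (fun i => w (lift ord0 i) / c); split => //.
  - by move=> i; apply: divr_ge0 => //; apply: ltW.
  - by rewrite -mulr_suml cE divff // gt_eqF.
have -> : x = w ord0 *: a + (1 - w ord0) *: x'.
  rewrite xE /x' scaler_sumr; congr (_ + _); apply: eq_bigr => i _.
  rewrite scalerA; congr (_ *: _); rewrite /c; field; apply: lt0r_neq0; exact: c0.
apply: hull_mix; [by apply: hull_base; rewrite inE eqxx|exact: hS|exact: w0|done].
Qed.

Lemma hull_conv_hull (R : realFieldType) (r : nat) (S : seq 'rV[R]_r) x :
  hull (fun y => y \in S) x -> conv_hull S x.
Proof.
elim=> [y yS|y z t _ [w1 [w10 w11 yE]] _ [w2 [w20 w21 zE]] t0 t1].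
  have iS : (index y S < size S)%N by rewrite index_mem.
  pose i0 : 'I_(size S) := Ordinal iS.
  exists (fun i => (i == i0)%:R); split.
  - by move=> i; apply: ler0n.
  - by rewrite (bigD1 i0) //= eqxx big1 ?addr0 // => i /negbTE ->.
  - rewrite (bigD1 i0) //= eqxx scale1r big1 ?addr0 ?nth_index //.
    by move=> i /negbTE ->; rewrite scale0r.
exists (fun i => t * w1 i + (1 - t) * w2 i); split.
- move=> i; apply: addr_ge0; apply: mulr_ge0 => //; by rewrite subr_ge0.
- by rewrite big_split /= -!mulr_sumr w11 w21; ring.
- rewrite yE zE !scaler_sumr -big_split /=; apply: eq_bigr => i _.
  by rewrite [RHS]scalerDl !scalerA.
Qed.



Definition ev (R : realFieldType) (r : nat) (m : 'X_{1..r}) : 'rV[R]_r :=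
  \row_(i < r) (m i)%:R.
Arguments ev R [r] m.

Lemma lexpE (R : realFieldType) (r : nat) (m s : 'X_{1..r}) :
  lexp R m s = ev R m - ev R s.
Proof. by apply/rowP => i; rewrite !mxE. Qed.

Lemma evD (R : realFieldType) (r : nat) (m n : 'X_{1..r}) :
  ev R (m + n)%MM = ev R m + ev R n.
Proof. by apply/rowP => i; rewrite !mxE mnmDE natrD. Qed.

Lemma ev_inj (R : realFieldType) (r : nat) (m n : 'X_{1..r}) :
  ev R m = ev R n -> m = n.
Proof.
move=> h; apply/mnmP => i.
have := congr1 (fun v : 'rV[R]_r => v 0 i) h; rewrite /= !mxE => /eqP.
by rewrite eqr_nat => /eqP.
Qed.

Lemma mcoeffM_uniq (r : nat) (p q : {mpoly int[r]}) (a b : 'X_{1..r}) :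
  a \in msupp p -> b \in msupp q ->
  (forall a' b', a' \in msupp p -> b' \in msupp q -> (a' + b' = a + b)%MM ->
     (a', b') = (a, b)) ->
  (p * q)@_(a + b) = p@_a * q@_b.
Proof.
move=> ap bq U.
rewrite mpolyME raddf_sum (bigD1_seq (a, b)) /=; first last.
+ by rewrite allpairs_uniq => // -[? ?] [].
+ by rewrite allpairs_f.
rewrite mcoeffZ mcoeffX eqxx mulr1 big_seq_cond big1 ?addr0 //.
case=> a' b' /andP [/allpairsP [[x y] [/= a'p b'q [ex ey]]] ne].
rewrite -ex -ey in a'p b'q.
rewrite mcoeffZ mcoeffX; case: eqP => [h|_]; last by rewrite mulr0.
by rewrite (U _ _ a'p b'q h) eqxx in ne.
Qed.

Lemma key_sum (R : realFieldType) (r : nat) (p q : {mpoly int[r]}) m n :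
  m \in msupp p -> n \in msupp q ->
  hull (fun y => y \in [seq ev R k | k <- msupp (p * q)]) (ev R m + ev R n).
Proof.
move=> mp nq.
set s := [seq ev R a + ev R b | a <- msupp p, b <- msupp q].
have ms : ev R m + ev R n \in s by apply/allpairsP; exists (m, n).
apply: (@hull_extreme _ _ _ (size s) s (leqnn _)) ms => y /allpairsP [[a b] [/= ap bq ->]].
set P2 := [seq (a', b') | a' <- msupp p, b' <- msupp q].
have [/hasP [[a' b'] /allpairsP[[a'' b''] [/= a''p b''q [-> ->]]] /andP[/eqP sumE neq]] | /hasPn uniqd] :=
  boolP (has (fun k : 'X_{1..r} * 'X_{1..r} => ((k.1 + k.2)%MM == (a + b)%MM) && (k != (a, b))) P2).
- right.
  have eE : ev R a'' + ev R b'' = ev R a + ev R b by rewrite -!evD sumE.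
  have na : a'' != a.
    apply: contra neq => /eqP ea; rewrite ea in sumE *.
    by rewrite (addmI sumE).
  have nb : b'' != b.
    apply: contra neq => /eqP eb; rewrite eb in sumE *.
    by rewrite (addIm sumE).
  have yE : ev R a + ev R b = (1/2 : R) *: (ev R a + ev R b'') + (1 - 1/2) *: (ev R a'' + ev R b).
    apply/rowP => i; have := congr1 (fun v : 'rV[R]_r => v 0 i) eE; rewrite /= !mxE => h.
    lra.
  rewrite [X in hull _ X]yE; apply: hull_mix; last 2 first; [lra|lra|..].
  + apply: hull_base; split; first by apply/allpairsP; exists (a, b'').
    move=> /addrI /ev_inj eb.
    by rewrite eb eqxx in nb.
  + apply: hull_base; split; first by apply/allpairsP; exists (a'', b).
    move=> /addIr /ev_inj ea.
    by rewrite ea eqxx in na.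
- left; rewrite -evD; apply: map_f.
  rewrite mcoeff_msupp mcoeffM_uniq //; last first.
    move=> a' b' a'p b'q h; apply/eqP; apply: contraT => ne.
    have := uniqd (a', b'); rewrite /= h eqxx ne /=; apply.
    by apply/allpairsP; exists (a', b').
  by apply: mulf_neq0; rewrite -mcoeff_msupp.
Qed.



Definition lmul (r : nat) (f g : lpoly r) : lpoly r := (f.1 * g.1, (f.2 + g.2)%MM).
Definition ladd (r : nat) (f g : lpoly r) : lpoly r :=
  (f.1 * 'X_[g.2] + g.1 * 'X_[f.2], (f.2 + g.2)%MM).

Lemma lsupp_mul (R : realFieldType) (r : nat) (f g : lpoly r) y :
  y \in lsupp R (lmul f g) ->
  exists u v, [/\ u \in lsupp R f, v \in lsupp R g & y = u + v].
Proof.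
case/mapP => k /msuppM_le /allpairsP [[m n] [/= mf ng ->]] ->.
exists (lexp R m f.2), (lexp R n g.2); split; try exact: map_f.
by rewrite !lexpE evD evD; apply/rowP => i; rewrite !mxE; ring.
Qed.

Lemma lsupp_add (R : realFieldType) (r : nat) (f g : lpoly r) y :
  y \in lsupp R (ladd f g) -> y \in lsupp R f \/ y \in lsupp R g.
Proof.
case/mapP => k /msuppD_le; rewrite mem_cat => /orP [].
  rewrite (perm_mem (msuppMX _ _)) => /mapP [m mf ->] ->; left.
  apply/mapP; exists m => //=; rewrite !lexpE !evD.
  by apply/rowP => i; rewrite !mxE; ring.
rewrite (perm_mem (msuppMX _ _)) => /mapP [m mf ->] ->; right.
apply/mapP; exists m => //=; rewrite !lexpE !evD.
by apply/rowP => i; rewrite !mxE; ring.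
Qed.

Lemma hull_lmul (R : realFieldType) (r : nat) (f g : lpoly r) u v :
  u \in lsupp R f -> v \in lsupp R g ->
  hull (fun y => y \in lsupp R (lmul f g)) (u + v).
Proof.
case/mapP => m mf ->; case/mapP => n ng ->.
have H := key_sum R mf ng.
have := hull_map (f := fun w => w - ev R (f.2 + g.2)%MM) _ H.
move=> /(_ _) H2.
have -> : lexp R m f.2 + lexp R n g.2 = ev R m + ev R n - ev R (f.2 + g.2)%MM.
  by rewrite !lexpE evD; apply/rowP => i; rewrite !mxE; ring.
apply: hull_mono (H2 _).
  move=> w [z /mapP [k kfg ->] ->]; apply: hull_base.
  by apply/mapP; exists k => //; rewrite lexpE.
by move=> t a b; apply/rowP => i; rewrite !mxE; ring.
Qed.

Lemma hull_chain (R : realFieldType) (r : nat) (f g f' g' : lpoly r) u v :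
  (forall x, hull (fun y => y \in lsupp R f) x -> hull (fun y => y \in lsupp R f') x) ->
  (forall x, hull (fun y => y \in lsupp R g) x -> hull (fun y => y \in lsupp R g') x) ->
  u \in lsupp R f -> v \in lsupp R g ->
  hull (fun y => y \in lsupp R (lmul f' g')) (u + v).
Proof.
move=> Hf Hg uf vg.
have hu := Hf _ (hull_base uf); have hv := Hg _ (hull_base vg).
apply: hull_mono (hull_add hu hv) => w [a [b [af bg ->]]].
exact: hull_lmul.
Qed.

Lemma X_neq0 (r : nat) (s : 'X_{1..r}) : ('X_[s] : {mpoly int[r]}) != 0.
Proof. by rewrite -msupp_eq0 msuppX. Qed.

Lemma lfrac_neq0 (r : nat) (f : lpoly r) : f.1 != 0 -> lfrac f != 0.
Proof.
move=> f0; rewrite /lfrac mulf_neq0 ?invr_eq0 ?tofrac_eq0 //; exact: X_neq0.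
Qed.

Lemma lfracM (r : nat) (f g : lpoly r) : lfrac (lmul f g) = lfrac f * lfrac g.
Proof. by rewrite /lfrac /= mpolyXD !tofracM invfM mulrACA. Qed.

Lemma fracD_gen (F : fieldType) (A B X Y : F) : X != 0 -> Y != 0 ->
  (A * Y + B * X) / (X * Y) = A / X + B / Y.
Proof. move=> hX hY. rewrite invfM mulrDl. congr (_ + _).
  by rewrite mulrACA mulfV // mulr1.
by rewrite [X^-1 * _]mulrC mulrACA mulfV // mulr1.
Qed.

Lemma fracD2_gen (F : fieldType) (A B C D : F) : B != 0 -> D != 0 ->
  A / B + C / D = (A * D + C * B) / (B * D).
Proof. by move=> hB hD; rewrite fracD_gen. Qed.

Lemma fracM2_gen (F : fieldType) (A B C D : F) :
  A / B * (C / D) = (A * C) / (B * D).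
Proof. by rewrite invfM mulrACA. Qed.

Lemma lfracD (r : nat) (f g : lpoly r) : lfrac (ladd f g) = lfrac f + lfrac g.
Proof.
rewrite /lfrac /= mpolyXD tofracD !tofracM.
have h1 : @FracField.tofrac _ ('X_[f.2] : {mpoly int[r]}) != 0.
  by rewrite tofrac_eq0 X_neq0.
have h2 : @FracField.tofrac _ ('X_[g.2] : {mpoly int[r]}) != 0.
  by rewrite tofrac_eq0 X_neq0.
exact: (fracD_gen _ _ h1 h2).
Qed.

Lemma newton_hull (R : realFieldType) (r : nat) (f g : lpoly r) :
  (forall x : 'rV[R]_r, newton R f x -> newton R g x) ->
  forall x, hull (fun y => y \in lsupp R f) x -> hull (fun y => y \in lsupp R g) x.
Proof.
by move=> H x /hull_conv_hull /H /conv_hull_hull.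
Qed.

Unset Implicit Arguments.

Theorem lemma3p5 (R : realFieldType) (r : nat) (h1 h2 : {fraction {mpoly int[r]}}) :
  Nsmall R h1 -> Nsmall R h2 -> Nsmall R (h1 + h2) /\ Nsmall R (h1 * h2).
Proof.
move=> [a [b [b0 h1E /newton_hull Nab]]] [c [d [d0 h2E /newton_hull Ncd]]].
have Lb := lfrac_neq0 b0; have Ld := lfrac_neq0 d0.
have bd0 : (lmul b d).1 != 0 by rewrite /= mulf_neq0.
split.
- exists (ladd (lmul a d) (lmul c b)), (lmul b d); split; first exact: bd0.
    rewrite h1E h2E lfracD !lfracM (fracD2_gen _ _ Lb Ld); reflexivity.
  move=> x /conv_hull_hull H; apply: hull_conv_hull; apply: hull_mono H => y.
  case/lsupp_add => /lsupp_mul [u [v [uf vg ->]]].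
    exact: (hull_chain Nab (fun x h => h) uf vg).
  rewrite addrC; exact: (hull_chain (fun x h => h) Ncd vg uf).
- exists (lmul a c), (lmul b d); split; first exact: bd0.
    rewrite h1E h2E !lfracM fracM2_gen; reflexivity.
  move=> x /conv_hull_hull H; apply: hull_conv_hull; apply: hull_mono H => y.
  case/lsupp_mul => u [v [uf vg ->]].
  exact: (hull_chain Nab Ncd uf vg).
Qed.
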